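(* Let $G$ be a real $n\times m$ matrix and $\mathbf v\in\mathbb R^n$, and let $\mathcal G=\{x\in\mathbb R^m: Gx\le \mathbf v\}$ (componentwise). Let $P$ be the nonnegative orthant of $\mathbb R^n$ and $F=\mathcal R(G)$. Write $\mathbf v=\mathbf v_F+\upsilon$, where $\mathbf v_F$ is the orthogonal projection of $\mathbf v$ onto $F$ and $\upsilon$ is the orthogonal projection of $\mathbf v$ onto $F^\perp$. Assume $\upsilon\neq0$, $F\cap P=\{0\}$, and $\mathcal G\neq\emptyset$. Let $C_e=\{t\upsilon+z:t\ge0,\ z\in F\}$ and $P_c=(\mathbf v+F)\cap P$. Then $$\mathrm{Co}(P_c)=C_e\cap P,$$ where $\mathrm{Co}(S)$ denotes the convex cone generated by the set $S$, i.e. the set of all finite nonnegative linear combinations of elements of $S$.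
   Context: $P_c$ is called the contact polytope. Note that $\mathbf v+F=\upsilon+F$. *)

(* Defs.v *)
From mathcomp Require Import all_boot all_order all_algebra.
Set Implicit Arguments. Unset Strict Implicit. Unset Printing Implicit Defensive.
Import Order.TTheory GRing.Theory Num.Theory.
Local Open Scope ring_scope.

Definition dotv (R : realFieldType) (n : nat) (u w : 'cV[R]_n) : R :=
  \sum_(i < n) u i 0 * w i 0.

Definition vle (R : realFieldType) (n : nat) (u w : 'cV[R]_n) : Prop :=
  forall i, u i 0 <= w i 0.

Definition orthant (R : realFieldType) (n : nat) : 'cV[R]_n -> Prop :=
  fun x => forall i, 0 <= x i 0.

Definition range_mx (R : realFieldType) (n m : nat) (G : 'M[R]_(n, m))
  : 'cV[R]_n -> Prop :=
  fun x => exists y : 'cV[R]_m, x = G *m y.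

Definition cone_hull (R : realFieldType) (n : nat) (S : 'cV[R]_n -> Prop)
  : 'cV[R]_n -> Prop :=
  fun x => exists (k : nat) (c : 'I_k -> R) (s : 'I_k -> 'cV[R]_n),
    (forall j, 0 <= c j) /\ (forall j, S (s j)) /\ x = \sum_(j < k) c j *: s j.

(* Main.v *)
Require Import Defs.
From mathcomp Require Import all_boot all_order all_algebra.
Import Order.TTheory GRing.Theory Num.Theory.
Local Open Scope ring_scope.

Theorem mainTheorem2 (R : realFieldType) (n m : nat) (G : 'M[R]_(n, m))
  (v vF ups : 'cV[R]_n)
  (* v = vF + ups with vF the orthogonal projection of v onto F = R(G)
     and ups the orthogonal projection onto F^perp *)
  (hvF : range_mx G vF)
  (hups : forall z, range_mx G z -> dotv ups z = 0)
  (hdec : v = vF + ups)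
  (hups0 : ups != 0)
  (hFP : forall z, range_mx G z -> orthant z -> z = 0)
  (hGne : exists x : 'cV[R]_m, vle (G *m x) v) :
  forall x : 'cV[R]_n,
    cone_hull (fun y => (exists z, range_mx G z /\ y = v + z) /\ orthant y) x
    <-> ((exists (t : R) (z : 'cV[R]_n),
            0 <= t /\ range_mx G z /\ x = t *: ups + z) /\ orthant x).
Proof.
move=> x; split.
- case=> k [c [s [hc [hs ->]]]].
  have [yF eF] := hvF.
  have hs' : forall j, exists w, s j = ups + G *m w.
    move=> j; have [[z [[y ey] ->]] _] := hs j.
    exists (yF + y); rewrite hdec ey eF mulmxDr; by rewrite addrAC addrC addrA.
  have hr : forall j, range_mx G (s j - ups).
    move=> j; have [w ->] := hs' j; exists w; by rewrite addrC addKr.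
  split.
    exists (\sum_(j < k) c j), (\sum_(j < k) c j *: (s j - ups)).
    split; first by apply: sumr_ge0 => j _; exact: hc.
    split.
      apply: (big_ind (range_mx G)).
      - by exists 0; rewrite mulmx0.
      - by move=> a b [ya ->] [yb ->]; exists (ya + yb); rewrite mulmxDr.
      - move=> j _; have [y ->] := hr j; exists (c j *: y); by rewrite scalemxAr.
    rewrite scaler_suml -big_split /=.
    by apply: eq_bigr => j _; rewrite -scalerDr addrC subrK.
  move=> i; rewrite summxE; apply: sumr_ge0 => j _.
  rewrite mxE; apply: mulr_ge0; first exact: hc.
  by have [_ ->] := hs j.
- case=> [[t [z [ht [hz ex]]]] hx].
  have [t0|tpos] := eqVneq t 0.
    have x0 : x = 0 by apply: hFP => //; rewrite ex t0 scale0r add0r.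
    exists 0%N, (fun _ => 0), (fun _ => 0); split; first by case.
    split; first by case.
    by rewrite big_ord0.
  have tgt : 0 < t by rewrite lt0r tpos.
  exists 1%N, (fun _ => t), (fun _ => t^-1 *: x); split; first by move=> _.
  split; last by rewrite big_ord1 scalerA divff // scale1r.
  move=> _; split; last first.
    move=> i; rewrite mxE; apply: mulr_ge0; last exact: hx.
    by rewrite invr_ge0 ltW.
  have [yF eF] := hvF; have [y ey] := hz.
  exists (G *m (t^-1 *: y - yF)); split; first by eexists.
  rewrite ex scalerDr scalerA mulVf // scale1r hdec mulmxBr -scalemxAr -ey -eF.
  by rewrite [vF + ups]addrC -addrA ; congr (_ + _); by rewrite addrC subrK.
Qed.
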